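(* Let $(a,b,c,\lambda,\delta)\in(\mathbb F^\times)^4\times\mathbb F$. For any $\triangle_q$-module $V$ and $v\in V$, there exists a $\triangle_q$-module homomorphism $W_\lambda^\delta(a,b,c)\to V$ sending $w_0$ to $v$ if and only if (i) there exists a $\triangle_q$-module homomorphism $M_\lambda(a,b,c)\to V$ sending $m_0$ to $v$, and (ii) $\prod_{i=0}^{d'-1}(A-\theta_i)v=\delta v$.
   Context: $\mathbb F$ is an algebraically closed field and $q\in\mathbb F^\times$ a root of unity of order $d\notin\{1,2,4\}$; $d'=d$ if $d$ odd, $d'=d/2$ if $d$ even. $\triangle_q$ is the unital associative $\mathbb F$-algebra with generators $A,B,C$ subject to: each of $A+\frac{qBC-q^{-1}CB}{q^2-q^{-2}}$, $B+\frac{qCA-q^{-1}AC}{q^2-q^{-2}}$, $C+\frac{qAB-q^{-1}BA}{q^2-q^{-2}}$ is central; $\alpha,\beta,\gamma$ are these times $q+q^{-1}$. For $(a,b,c,\lambda)\in(\mathbb F^\times)^4$, $i\in\mathbb N$: $\theta_i=a\lambda^{-1}q^{2i}+a^{-1}\lambda q^{-2i}$, $\theta_i^*=b\lambda^{-1}q^{2i}+b^{-1}\lambda q^{-2i}$, $\varphi_i=a^{-1}b^{-1}\lambda q(q^i-q^{-i})(\lambda^{-1}q^{i-1}-\lambda q^{1-i})(q^{-i}-abc\lambda^{-1}q^{i-1})(q^{-i}-abc^{-1}\lambda^{-1}q^{i-1})$. $M_\lambda(a,b,c)$ has basis $\{m_i\}_{i\in\mathbb N}$ with $(A-\theta_i)m_i=m_{i+1}$,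 $(B-\theta_i^* )m_i=\varphi_im_{i-1}$, and $\alpha,\beta,\gamma$ acting as $(b+b^{-1})(c+c^{-1})+(a+a^{-1})(\lambda q+\lambda^{-1}q^{-1})$, $(c+c^{-1})(a+a^{-1})+(b+b^{-1})(\lambda q+\lambda^{-1}q^{-1})$, $(a+a^{-1})(b+b^{-1})+(c+c^{-1})(\lambda q+\lambda^{-1}q^{-1})$. For $\delta\in\mathbb F$, $O_\lambda^\delta(a,b,c)$ is the span of $\{\delta m_i-m_{d'+i}\}_{i\in\mathbb N}$ (a submodule), $W_\lambda^\delta(a,b,c)=M_\lambda(a,b,c)/O_\lambda^\delta(a,b,c)$ and $w_i=m_i+O_\lambda^\delta(a,b,c)$. *)

(* Defs.v *)
From HB Require Import structures.
From mathcomp Require Import all_boot all_order all_algebra.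
Set Implicit Arguments. Unset Strict Implicit. Unset Printing Implicit Defensive.
Import Order.TTheory GRing.Theory Num.Theory.
Local Open Scope ring_scope.

Section UAWq.
Variables (F : closedFieldType) (q : F).

(* The three elements whose centrality defines triangle_q, evaluated through
   actions A B C on a vector space (x \in V). *)
Definition cA {V : lmodType F} (A B C : V -> V) (x : V) : V :=
  A x + (q ^+ 2 - q ^- 2)^-1 *: (q *: B (C x) - q^-1 *: C (B x)).

Record triMod := TriMod {
  tm_sort :> lmodType F;
  tmA : {linear tm_sort -> tm_sort};
  tmB : {linear tm_sort -> tm_sort};
  tmC : {linear tm_sort -> tm_sort};
  tm_central :
    forall (X : tm_sort -> tm_sort),
      (X = cA tmA tmB tmC \/ X = cA tmB tmC tmA \/ X = cA tmC tmA tmB) ->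
      forall x, X (tmA x) = tmA (X x) /\ X (tmB x) = tmB (X x)
                /\ X (tmC x) = tmC (X x)
}.

Definition intertwines {U V : lmodType F} (AU BU CU : U -> U)
  (AV BV CV : V -> V) (f : U -> V) : Prop :=
  forall x, f (AU x) = AV (f x) /\ f (BU x) = BV (f x) /\ f (CU x) = CV (f x).


Definition theta (a b c lam : F) (i : nat) : F :=
  a * lam^-1 * q ^ (2 * i%:Z) + a^-1 * lam * q ^ (- (2 * i%:Z)).
Definition thetas (a b c lam : F) (i : nat) : F :=
  b * lam^-1 * q ^ (2 * i%:Z) + b^-1 * lam * q ^ (- (2 * i%:Z)).
Definition phi (a b c lam : F) (i : nat) : F :=
  a^-1 * b^-1 * lam * q * (q ^ i%:Z - q ^ (- i%:Z))
  * (lam^-1 * q ^ (i%:Z - 1) - lam * q ^ (1 - i%:Z))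
  * (q ^ (- i%:Z) - a * b * c * lam^-1 * q ^ (i%:Z - 1))
  * (q ^ (- i%:Z) - a * b * c^-1 * lam^-1 * q ^ (i%:Z - 1)).

(* Scalars by which alpha, beta, gamma act on M_lambda(a,b,c). *)
Definition alpha0 (a b c lam : F) : F := (b + b^-1) * (c + c^-1) + (a + a^-1) * (lam * q + lam^-1 * q^-1).
Definition beta0 (a b c lam : F) : F := (c + c^-1) * (a + a^-1) + (b + b^-1) * (lam * q + lam^-1 * q^-1).
Definition gamma0 (a b c lam : F) : F := (a + a^-1) * (b + b^-1) + (c + c^-1) * (lam * q + lam^-1 * q^-1).

(* M_lambda(a,b,c): underlying space {poly F}, with m_i := 'X^i. *)
Definition MA (a b c lam : F) (p : {poly F}) : {poly F} :=
  \sum_(i < size p) p`_i *: (theta a b c lam i *: 'X^i + 'X^(i.+1)).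
Definition MB (a b c lam : F) (p : {poly F}) : {poly F} :=
  \sum_(i < size p) p`_i *: (thetas a b c lam i *: 'X^i + phi a b c lam i *: 'X^(i.-1)).
(* C is determined by the fact that gamma = (q+q^-1)(C + (qAB-q^-1BA)/(q^2-q^-2))
   acts as the scalar gamma0. *)
Definition MC (a b c lam : F) (p : {poly F}) : {poly F} :=
  (gamma0 a b c lam / (q + q^-1)) *: p
  - (q ^+ 2 - q ^- 2)^-1 *: (q *: MA a b c lam (MB a b c lam p) - q^-1 *: MB a b c lam (MA a b c lam p)).
Definition m0 : {poly F} := 1.

Definition dprime (d : nat) : nat := if odd d then d else d./2.


(* O^delta_lambda(a,b,c) = span{delta m_i - m_(d'+i)} is exactly the set of
   polynomials divisible by g := 'X^d' - delta.  The quotient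
   W = M / O is modelled by 'rV_d', via the canonical projection
   p |-> coordinates of (p %% g) in the basis 1, X, ..., X^(d'-1). *)
Definition gW (d : nat) (delta : F) : {poly F} := 'X^(dprime d) - delta%:P.
Definition toW (d : nat) (delta : F) (p : {poly F}) : 'rV[F]_(dprime d) :=
  \row_(j < dprime d) (p %% gW d delta)`_j.
Definition ofW (d : nat) (r : 'rV[F]_(dprime d)) : {poly F} :=
  \sum_(j < dprime d) r 0 j *: 'X^j.
Definition WA (a b c lam : F) (d : nat) (delta : F) (r : 'rV[F]_(dprime d)) :=
  toW d delta (MA a b c lam (ofW r)).
Definition WB (a b c lam : F) (d : nat) (delta : F) (r : 'rV[F]_(dprime d)) :=
  toW d delta (MB a b c lam (ofW r)).
Definition WC (a b c lam : F) (d : nat) (delta : F) (r : 'rV[F]_(dprime d)) :=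
  toW d delta (MC a b c lam (ofW r)).
Definition w0 (d : nat) (delta : F) : 'rV[F]_(dprime d) := toW d delta 1.

Fixpoint prodAtheta (a b c lam : F) (V : lmodType F) (A : V -> V) (n : nat) (v : V) : V :=
  match n with
  | 0 => v
  | n'.+1 => A (prodAtheta a b c lam A n' v) - theta a b c lam n' *: prodAtheta a b c lam A n' v
  end.

End UAWq.

Arguments WA {F} q a b c lam d delta r.
Arguments WB {F} q a b c lam d delta r.
Arguments WC {F} q a b c lam d delta r.
Arguments w0 {F} d delta.
Arguments ofW {F} d r.

(* Main.v *)
Require Import Defs.
From HB Require Import structures.
From mathcomp Require Import all_boot all_order all_algebra.
From mathcomp Require Import ring.
Import GRing.Theory.
Local Open Scope ring_scope.

Section Aux.
Variable F : closedFieldType.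
Implicit Types p r : {poly F}.

Definition Se (e : nat -> {poly F}) (p : {poly F}) : {poly F} :=
  \sum_(i < size p) p`_i *: e i.

Lemma Se_widen e p N : (size p <= N)%N -> Se e p = \sum_(i < N) p`_i *: e i.
Proof.
move=> H; rewrite /Se -(subnKC H) big_split_ord /= [X in _ + X]big1 ?addr0 //.
by move=> i _; rewrite nth_default ?scale0r //= leq_addr.
Qed.

Lemma Se_lin e : linear (Se e).
Proof.
move=> k x y.
have Hx : (size x <= size x + size y)%N by rewrite leq_addr.
have Hy : (size y <= size x + size y)%N by rewrite leq_addl.
have Hs : (size (k *: x + y)%R <= size x + size y)%N.
  apply: leq_trans (size_polyD _ _) _; rewrite geq_max Hy andbT.
  exact: leq_trans (size_scale_leq _ _) Hx.
rewrite (Se_widen _ _ _ Hx) (Se_widen _ _ _ Hy) (Se_widen _ _ _ Hs) scaler_sumr -big_split /=.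
by apply: eq_bigr => i _; rewrite coefD coefZ scalerDl scalerA.
Qed.

HB.instance Definition _ e := GRing.isLinear.Build F _ _ _ (Se e) (Se_lin e).

Lemma Se_X e k : Se e 'X^k = e k.
Proof.
rewrite /Se size_polyXn big_ord_recr /= big1 ?add0r; first by rewrite coefXn eqxx scale1r.
by move=> i _; rewrite coefXn /= ltn_eqF ?scale0r. 
Qed.

Lemma Se_mulXn e n p : (forall j, e (j + n)%N = e j * 'X^n) ->
  Se e (p * 'X^n) = Se e p * 'X^n.
Proof.
move=> He; rewrite -[p]coefK poly_def mulr_suml !linear_sum /= mulr_suml.
apply: eq_bigr => i _; rewrite -scalerAl !linearZ /= -exprD !Se_X He.
by rewrite scalerAl.
Qed.

Lemma Se_mulg e d (dl : F) p : (forall j, e (j + dprime d)%N = e j * 'X^(dprime d)) ->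
  Se e (p * gW d dl) = Se e p * gW d dl.
Proof.
move=> He; rewrite /gW !mulrBr linearB /= Se_mulXn //.
by rewrite (mulrC p) mul_polyC linearZ /= [_ * dl%:P]mulrC mul_polyC.
Qed.

Lemma toW_lin d (dl : F) : linear (toW d dl).
Proof. move=> k x y; rewrite /toW modpD modpZl; apply/rowP => j; rewrite !mxE coefD coefZ //. Qed.
HB.instance Definition _ d (dl : F) := GRing.isLinear.Build F _ _ _ (toW d dl) (toW_lin d dl).

Lemma ofW_lin d : linear (@ofW F d).
Proof.
move=> k x y; rewrite /ofW scaler_sumr -big_split /=; apply: eq_bigr => j _.
by rewrite !mxE scalerDl scalerA.
Qed.
HB.instance Definition _ d := GRing.isLinear.Build F _ _ _ (@ofW F d) (ofW_lin d).

Lemma gW_size d (dl : F) : (0 < dprime d)%N -> size (gW d dl) = (dprime d).+1.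
Proof. by move=> H; rewrite /gW size_XnsubC. Qed.

Lemma ofW_toW d (dl : F) p : (0 < dprime d)%N -> ofW d (toW d dl p) = p %% gW d dl.
Proof.
move=> H; have Hg : gW d dl != 0 by rewrite -size_poly_eq0 gW_size.
have Hs : (size (p %% gW d dl)%R < (dprime d).+1)%N by rewrite -(gW_size d dl H) ltn_modp.
rewrite /ofW; under eq_bigr => j _ do rewrite mxE.
rewrite -poly_def; apply/polyP => k; rewrite coef_poly; case: ltnP => // Hk.
by rewrite nth_default // -ltnS (leq_trans Hs).
Qed.

Lemma toW_compat d (dl : F) (X : {poly F} -> {poly F}) p :
  (forall p r, X (p + r) = X p + X r) -> (forall p, X (p * gW d dl) = X p * gW d dl) ->
  toW d dl (X p) = toW d dl (X (p %% gW d dl)).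
Proof.
move=> Had Hm; rewrite {1}(divp_eq p (gW d dl)) Had Hm /toW modpD modp_mull add0r.
by [].
Qed.

End Aux.

Section Per.
Variables (F : closedFieldType) (q a b c lam : F) (d : nat) (dl : F).
Hypothesis Hq0 : q != 0.
Hypothesis Hs : q ^+ dprime d = 1 \/ q ^+ dprime d = -1.
Local Notation n := (dprime d).

Lemma expzS z : q ^ (z + n%:Z) = q ^ z * q ^+ n.
Proof. by rewrite expfzDr. Qed.
Lemma expzSN z : q ^ (z - n%:Z) = q ^ z * q ^+ n.
Proof.
rewrite expfzDr // -invr_expz; congr (_ * _).
have -> : q ^ n%:Z = q ^+ n by [].
by case: Hs => ->; rewrite ?invr1 ?invrN1.
Qed.

Lemma theta_per j : theta q a b c lam (j + n) = theta q a b c lam j.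
Proof.
rewrite /theta.
have -> : - (2 * (j + n)%N%:Z) = - (2 * j%:Z) - n%:Z - n%:Z by rewrite PoszD; ring.
have -> : 2 * (j + n)%N%:Z = 2 * j%:Z + n%:Z + n%:Z by rewrite PoszD; ring.
by rewrite !expzSN !expzS; case: Hs => ->; ring.
Qed.

Lemma thetas_per j : thetas q a b c lam (j + n) = thetas q a b c lam j.
Proof.
rewrite /thetas.
have -> : - (2 * (j + n)%N%:Z) = - (2 * j%:Z) - n%:Z - n%:Z by rewrite PoszD; ring.
have -> : 2 * (j + n)%N%:Z = 2 * j%:Z + n%:Z + n%:Z by rewrite PoszD; ring.
by rewrite !expzSN !expzS; case: Hs => ->; ring.
Qed.

Lemma phi_per j : phi q a b c lam (j + n) = phi q a b c lam j.
Proof.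
rewrite /phi.
have -> : 1 - (j + n)%N%:Z = (1 - j%:Z) - n%:Z by rewrite PoszD; ring.
have -> : (j + n)%N%:Z - 1 = (j%:Z - 1) + n%:Z by rewrite PoszD; ring.
have -> : - (j + n)%N%:Z = - j%:Z - n%:Z by rewrite PoszD; ring.
rewrite PoszD.
by rewrite !expzSN !expzS; case: Hs => ->; ring.
Qed.

Lemma phi0 : phi q a b c lam 0 = 0.
Proof. by rewrite /phi subrr !mulr0 !mul0r. Qed.

End Per.

Section M.
Variables (F : closedFieldType) (q a b c lam : F) (d : nat) (dl : F).
Hypothesis Hq0 : q != 0.
Hypothesis Hs : q ^+ dprime d = 1 \/ q ^+ dprime d = -1.
Local Notation n := (dprime d).
Local Notation g := (gW d dl).

Definition eA (j : nat) : {poly F} := theta q a b c lam j *: 'X^j + 'X^(j.+1).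
Definition eB (j : nat) : {poly F} := thetas q a b c lam j *: 'X^j + phi q a b c lam j *: 'X^(j.-1).

Lemma eA_per j : eA (j + n) = eA j * 'X^n.
Proof. by rewrite /eA theta_per // mulrDl -scalerAl -!exprD addSn. Qed.

Lemma eB_per j : eB (j + n) = eB j * 'X^n.
Proof.
rewrite /eB thetas_per // phi_per // mulrDl -!scalerAl -!exprD; case: j => [|j].
  by rewrite phi0 !scale0r.
by rewrite addSn.
Qed.

Lemma MA_Se p : MA q a b c lam p = Se F eA p. Proof. by []. Qed.
Lemma MB_Se p : MB q a b c lam p = Se F eB p. Proof. by []. Qed.

Lemma MA_add p r : MA q a b c lam (p + r) = MA q a b c lam p + MA q a b c lam r.
Proof. by rewrite !MA_Se linearD. Qed.
Lemma MB_add p r : MB q a b c lam (p + r) = MB q a b c lam p + MB q a b c lam r.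
Proof. by rewrite !MB_Se linearD. Qed.
Lemma MA_mulg p : MA q a b c lam (p * g) = MA q a b c lam p * g.
Proof. by rewrite !MA_Se Se_mulg //; apply: eA_per. Qed.
Lemma MB_mulg p : MB q a b c lam (p * g) = MB q a b c lam p * g.
Proof. by rewrite !MB_Se Se_mulg //; apply: eB_per. Qed.
Lemma MA_X i : MA q a b c lam 'X^i = eA i.
Proof. by rewrite MA_Se Se_X. Qed.

Lemma MC_add p r : MC q a b c lam (p + r) = MC q a b c lam p + MC q a b c lam r.
Proof. rewrite /MC !(MA_add, MB_add) -!mul_polyC; ring. Qed.
Lemma MC_mulg p : MC q a b c lam (p * g) = MC q a b c lam p * g.
Proof. rewrite /MC !(MA_mulg, MB_mulg) -!mul_polyC; ring. Qed.

Lemma XS k : 'X^(k.+1) = MA q a b c lam 'X^k - theta q a b c lam k *: 'X^k :> {poly F}.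
Proof. by rewrite MA_X /eA addrAC subrr add0r. Qed.

Variables (V : lmodType F) (A : {linear V -> V}) (gg : {linear {poly F} -> V}).
Hypothesis HgA : forall x, gg (MA q a b c lam x) = A (gg x).

Lemma g_X i : gg 'X^i = prodAtheta q a b c lam A i (gg 1).
Proof.
elim: i => [|i IH] /=; first by rewrite expr0.
by rewrite -IH -HgA -linearZ -linearB -XS.
Qed.

Hypothesis Hd : prodAtheta q a b c lam A n (gg 1) = dl *: gg 1.

Lemma g_shift i : gg 'X^(i + n) = dl *: gg 'X^i.
Proof.
elim: i => [|i IH]; first by rewrite add0n expr0 g_X.
rewrite addSn XS linearB linearZ /= HgA IH theta_per // XS linearB linearZ /= HgA.
by rewrite linearZ /= scalerBr [gg (_ *: _)]linearZ /= scalerN !scalerA mulrC.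
Qed.

Lemma g_mulg p : gg (p * g) = 0.
Proof.
rewrite -[p]coefK poly_def mulr_suml linear_sum big1 // => i _.
rewrite -scalerAl linearZ /= /gW mulrBr -exprD mulrC mul_polyC linearB linearZ /=.
by rewrite g_shift subrr scaler0.
Qed.

Lemma g_mod p : gg (p %% g) = gg p.
Proof. by rewrite {2}(divp_eq p g) linearD /= g_mulg add0r. Qed.

End M.

Lemma toW_Xn (F : closedFieldType) d (dl : F) :
  toW d dl 'X^(dprime d) = dl *: toW d dl 1.
Proof.
have -> : 'X^(dprime d) = gW d dl + dl *: 1 by rewrite /gW -mul_polyC mulr1 subrK.
rewrite linearD linearZ /=; have -> : toW d dl (gW d dl) = 0.
  by apply/rowP => j; rewrite !mxE modpp coef0.
by rewrite add0r.
Qed.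

Theorem proposition6p2 (F : closedFieldType) (q : F) (d : nat)
  (Hq : d.-primitive_root q) (Hd : ~ (d \in [:: 0%N; 1%N; 2%N; 4%N]))
  (a b c lam delta : F)
  (Ha : a != 0) (Hb : b != 0) (Hc : c != 0) (Hlam : lam != 0)
  (V : triMod q) (v : V) :
  (exists f : {linear 'rV[F]_(dprime d) -> V},
      intertwines (WA q a b c lam d delta) (WB q a b c lam d delta)
                  (WC q a b c lam d delta) (tmA V) (tmB V) (tmC V) f
      /\ f (w0 d delta) = v)
  <->
  ((exists f : {linear {poly F} -> V},
      intertwines (MA q a b c lam) (MB q a b c lam) (MC q a b c lam)
                  (tmA V) (tmB V) (tmC V) f
      /\ f (m0 F) = v)
   /\ prodAtheta q a b c lam (tmA V) (dprime d) v = delta *: v).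
Proof.
have Hd0 : d != 0%N by apply/eqP => E; apply: Hd; rewrite E.
have Hn0 : (0 < dprime d)%N.
  rewrite /dprime; case: ifP => Ho; first by rewrite lt0n.
  rewrite lt0n; apply/eqP => E; move: (odd_double_half d); rewrite Ho E /= => H.
  by rewrite -H in Hd0.
have Hq1 : q ^+ d = 1 := prim_expr_order Hq.
have Hq0 : q != 0.
  apply/eqP => E; move: Hq1; rewrite E expr0n (negbTE Hd0) => /eqP.
  by rewrite eq_sym oner_eq0.
have H2n : q ^+ (dprime d * 2) = 1.
  rewrite /dprime; case: ifP => Ho; first by rewrite exprM Hq1 expr1n.
  have -> : (d./2 * 2 = d)%N by move: (odd_double_half d); rewrite Ho add0n -muln2.
  exact: Hq1.
have Hs : q ^+ dprime d = 1 \/ q ^+ dprime d = -1.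
  have E : (q ^+ dprime d - 1) * (q ^+ dprime d + 1) = q ^+ (dprime d * 2) - 1.
    rewrite exprM; set x := q ^+ dprime d; ring.
  rewrite H2n subrr in E; move/eqP: E; rewrite mulf_eq0 subr_eq0 addr_eq0.
  by case/orP => /eqP; auto.
split.
- case=> f [Hint Hf0].
  have [g Hg] : exists g : {linear {poly F} -> V}, forall x, g x = f (toW d delta x).
    by exists (f \o toW d delta)%FUN.
  have HA : forall p, toW d delta (MA q a b c lam p) = toW d delta (MA q a b c lam (p %% gW d delta)).
    move=> p; apply: toW_compat; [exact: MA_add | exact: (MA_mulg _ _ _ _ _ _ _ _ Hq0 Hs)].
  have HB : forall p, toW d delta (MB q a b c lam p) = toW d delta (MB q a b c lam (p %% gW d delta)).
    move=> p; apply: toW_compat; [exact: MB_add | exact: (MB_mulg _ _ _ _ _ _ _ _ Hq0 Hs)].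
  have HC : forall p, toW d delta (MC q a b c lam p) = toW d delta (MC q a b c lam (p %% gW d delta)).
    move=> p; apply: toW_compat; [exact: MC_add | exact: (MC_mulg _ _ _ _ _ _ _ _ Hq0 Hs)].
  have Hint' : intertwines (MA q a b c lam) (MB q a b c lam) (MC q a b c lam)
                  (tmA V) (tmB V) (tmC V) g.
    move=> x; rewrite !Hg; have [h1 [h2 h3]] := Hint (toW d delta x).
    rewrite -h1 -h2 -h3 /WA /WB /WC !ofW_toW // -HA -HB -HC.
    by [].
  split; first by exists g; split => //; rewrite Hg.
  have HgA : forall x, g (MA q a b c lam x) = tmA V (g x) by move=> x; case: (Hint' x).
  have -> : v = g 1 by rewrite Hg -Hf0.
  rewrite -(g_X _ _ _ _ _ _ _ _ _ HgA) Hg toW_Xn linearZ /=.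
  by rewrite Hg.
- case=> [[g [Hint Hg1]] Hprod].
  have HgA : forall x, g (MA q a b c lam x) = tmA V (g x) by move=> x; case: (Hint x).
  have Hpr : prodAtheta q a b c lam (tmA V) (dprime d) (g 1) = delta *: g 1.
    by rewrite -/(m0 F) Hg1.
  have Hm := g_mod _ _ _ _ _ _ _ _ Hq0 Hs _ _ _ HgA Hpr.
  exists (g \o ofW d)%FUN; split.
    move=> r /=; have [h1 [h2 h3]] := Hint (ofW d r).
    by rewrite /WA /WB /WC !ofW_toW // !Hm.
  by rewrite /= /w0 ofW_toW // Hm.
Qed.
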